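(* Let $V$ be a vector space over a field $\mathbb{K}$ and $F$ a bilinear form on $V$. For all integers $k,l\ge0$, $$a_k^F a_l^F=a_l^F a_k^F=\binom{k+l}{k}\,a_{k+l}^F$$ as endomorphisms of $\mathcal{T}(V)$.
   Context: $\mathcal{T}(V)$ is the tensor algebra of $V$. Define $a_0^F=\mathrm{Id}_{\mathcal{T}(V)}$ and, for $k>0$, the linear map $a_k^F$ on $\mathcal{T}(V)$ by $a_k^F(x_1\otimes\cdots\otimes x_p)=0$ if $p<2k$, and for $p\ge2k$ $$a_k^F(x_1\otimes\cdots\otimes x_p)=\sum_{(i_1,j_1,\dots,i_k,j_k)}(-1)^{\sigma}F(x_{i_1},x_{j_1})\cdots F(x_{i_k},x_{j_k})\,X_{(i_1,\dots,j_k)},$$ summing over pairwise distinct indices in $\{1,\dots,p\}$ with $i_l<j_l$ and $i_1<\cdots<i_k$, where $X_{(i_1,\dots,j_k)}$ is $x_1\otimes\cdots\otimes x_p$ with the factors $x_{i_1},x_{j_1},\dots,x_{i_k},x_{j_k}$ omitted, and $(-1)^\sigma$ is the sign of the permutation of $\{1,\dots,p\}$ given by $i_1,j_1,\dots,i_k,j_k$ followed by the remaining indices in increasing order. The binomial coefficient is interpreted as an integer multiple in $\mathbb{K}$. *)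

(* Defs.v *)
From HB Require Import structures.
From mathcomp Require Import all_boot all_order all_algebra all_fingroup.
From mathcomp Require Import freeg.
Set Implicit Arguments. Unset Strict Implicit. Unset Printing Implicit Defensive.
Import Order.TTheory GRing.Theory Num.Theory.
Local Open Scope ring_scope.

(* The tensor algebra T(V) = (+)_p V^{(x)p} is realised as the free    *)
(* K-module on words (x_1,...,x_p) : seq V, modulo the K-span of the   *)
(* multilinearity relations.  A word w stands for the pure tensor      *)
(* x_1 (x) ... (x) x_p.                                                *)

Definition freeT (K : fieldType) (V : lmodType K) := {freeg (seq V) / K}.

Definition multilin_gen (K : fieldType) (V : lmodType K) (t : freeT V) : Prop :=
  exists (u v : seq V) (x y : V) (a b : K),
    t = << u ++ (a *: x + b *: y) :: v >> - a *: << u ++ x :: v >>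
        - b *: << u ++ y :: v >>.

Inductive in_span (K : fieldType) (M : lmodType K) (S : M -> Prop) : M -> Prop :=
  | span0 : in_span S 0
  | span_gen t : S t -> in_span S t
  | spanD t1 t2 : in_span S t1 -> in_span S t2 -> in_span S (t1 + t2)
  | spanZ c t : in_span S t -> in_span S (c *: t).

Definition tensor_eq (K : fieldType) (V : lmodType K) (t1 t2 : freeT V) : Prop :=
  in_span (@multilin_gen K V) (t1 - t2).

(* the permutation of 'I_n given by f (identity if f is not injective) *)
Definition perm_of_fun (n : nat) (f : 'I_n -> 'I_n) : {perm 'I_n} :=
  match @injectiveP _ _ f with
  | ReflectT inj => perm inj
  | ReflectF _ => 1%g
  end.

(* The operators a_k^F.  Indices are 0-based: x_i = nth 0 w i.        *)
(* A choice (i_1,j_1,...,i_k,j_k) is a k-tuple of pairs (i_l,j_l).     *)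
Section AkF.
Variables (K : fieldType) (V : lmodType K) (F : V -> V -> K).

Definition chosen (p k : nat) (t : k.-tuple ('I_p * 'I_p)) : seq 'I_p :=
  flatten [seq [:: ij.1; ij.2] | ij <- t].

Definition admissible (p k : nat) (t : k.-tuple ('I_p * 'I_p)) : bool :=
  [&& all (fun ij => (val ij.1 < val ij.2)%N) t,
      sorted ltn [seq val ij.1 | ij <- t] & uniq (chosen t)].

Definition remaining (p k : nat) (t : k.-tuple ('I_p * 'I_p)) : seq 'I_p :=
  [seq m <- enum 'I_p | m \notin chosen t].

Definition sigma (p k : nat) (t : k.-tuple ('I_p * 'I_p)) : {perm 'I_p} :=
  perm_of_fun (fun m : 'I_p => nth m (chosen t ++ remaining t) m).

Definition a_word (k : nat) (w : seq V) : freeT V :=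
  \sum_(t : k.-tuple ('I_(size w) * 'I_(size w)) | admissible t)
     (((-1) ^+ odd_perm (sigma t)) *
      \prod_(ij <- t) F (nth 0 w ij.1) (nth 0 w ij.2))
     *: << [seq nth 0 w (val m) | m : 'I_(size w) <- remaining t] >>.

Definition aF (k : nat) : freeT V -> freeT V := fglift (a_word k).

End AkF.

(* Main.v *)
Require Import Defs.
From HB Require Import structures.
From mathcomp Require Import all_boot all_order all_algebra all_fingroup.
From mathcomp Require Import freeg zify ring.
Import GRing.Theory.
Set Implicit Arguments. Unset Strict Implicit. Unset Printing Implicit Defensive.

Definition pm {a b} (g : 'I_a -> 'I_b) (ij : 'I_a * 'I_a) := (g ij.1, g ij.2).
Definition chs {p} (s : seq ('I_p * 'I_p)) : seq 'I_p := flatten [seq [:: ij.1; ij.2] | ij <- s].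
Definition adms {p} (s : seq ('I_p * 'I_p)) : bool :=
  [&& all (fun ij => (val ij.1 < val ij.2)%N) s,
      sorted ltn [seq val ij.1 | ij <- s] & uniq (chs s)].
Definition rems {p} (s : seq ('I_p * 'I_p)) : seq 'I_p :=
  [seq m <- enum 'I_p | m \notin chs s].
Definition sgs {p} (s : seq ('I_p * 'I_p)) : {perm 'I_p} :=
  perm_of_fun (fun m : 'I_p => nth m (chs s ++ rems s) m).
Definition ltv {p} (a b : 'I_p) := (val a < val b)%N.

Lemma chs_cons p (ij : 'I_p * 'I_p) s : chs (ij :: s) = ij.1 :: ij.2 :: chs s.
Proof. by []. Qed.

Lemma chs_map a b (g : 'I_a -> 'I_b) s : chs (map (pm g) s) = map g (chs s).
Proof. by elim: s => // ij s IH; rewrite map_cons !chs_cons IH. Qed.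

Lemma size_chs p (s : seq ('I_p * 'I_p)) : size (chs s) = (size s).*2.
Proof. by elim: s => // ij s IH; rewrite chs_cons /= IH. Qed.

Lemma mem_chs p (ij : 'I_p * 'I_p) s : ij \in s -> (ij.1 \in chs s) && (ij.2 \in chs s).
Proof.
elim: s => //= a s IH; rewrite in_cons chs_cons !in_cons => /orP[/eqP->|/IH/andP[h1 h2]].
  by rewrite !eqxx !orbT.
by rewrite h1 h2 !orbT.
Qed.

Lemma vlift0 n (i : 'I_n) : \val (fintype.lift ord0 i) = i.+1.
Proof. by []. Qed.
Definition L0 := (lift0, vlift0).

Lemma ltv_trans p : transitive (@ltv p).
Proof. by move=> a b c; apply: ltn_trans. Qed.
Lemma ltv_irr p : irreflexive (@ltv p).
Proof. by move=> a; apply: ltnn. Qed.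

Lemma enum_sorted p : sorted (@ltv p) (enum 'I_p).
Proof.
have := iota_ltn_sorted 0 p; rewrite -val_enum_ord sorted_map.
by apply: sub_sorted.
Qed.

Lemma rems_sorted p (s : seq ('I_p * 'I_p)) : sorted ltv (rems s).
Proof. exact: (sorted_filter (@ltv_trans p) _ (enum_sorted p)). Qed.

Lemma mem_rems p (s : seq ('I_p * 'I_p)) m : (m \in rems s) = (m \notin chs s).
Proof. by rewrite mem_filter mem_enum andbT. Qed.

Lemma rems_char p (s : seq ('I_p * 'I_p)) r : sorted ltv r ->
  (forall m, (m \in r) = (m \notin chs s)) -> r = rems s.
Proof.
move=> sr mr; apply: (irr_sorted_eq (@ltv_trans p) (@ltv_irr p)) => //.
  exact: rems_sorted.
by move=> m; rewrite mr mem_rems.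
Qed.

Lemma sgsE p (s : seq ('I_p * 'I_p)) : uniq (chs s) ->
  forall m, sgs s m = nth m (chs s ++ rems s) m.
Proof.
move=> uc.
set S := chs s ++ rems s.
have uS : uniq S.
  rewrite cat_uniq uc filter_uniq ?enum_uniq // andbT.
  by apply/hasPn => m; rewrite mem_rems.
have pS : perm_eq S (enum 'I_p).
  apply: uniq_perm => //; first exact: enum_uniq.
  by move=> m; rewrite mem_cat mem_rems mem_enum orbN.
have szS : size S = p by rewrite (perm_size pS) size_enum_ord.
have inj : injective (fun m : 'I_p => nth m S m).
  move=> a b /=; rewrite (set_nth_default a b) ?szS //.
  move/eqP; rewrite nth_uniq ?szS // => /eqP; exact: val_inj.
move=> m; rewrite /sgs /perm_of_fun.
case: injectiveP => [inj'|]; first by rewrite permE.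
by [].
Qed.


Lemma size_cr p (s : seq ('I_p * 'I_p)) : uniq (chs s) -> size (chs s ++ rems s) = p.
Proof.
move=> uc; set S := chs s ++ rems s.
have uS : uniq S.
  rewrite cat_uniq uc filter_uniq ?enum_uniq // andbT.
  by apply/hasPn => m; rewrite mem_rems.
have pS : perm_eq S (enum 'I_p).
  apply: uniq_perm => //; first exact: enum_uniq.
  by move=> m; rewrite mem_cat mem_rems mem_enum orbN.
by rewrite (perm_size pS) size_enum_ord.
Qed.

Lemma mono_inj a b (g : 'I_a -> 'I_b) :
  (forall x y, (g x < g y)%N = (x < y)%N) -> injective g.
Proof.
move=> mono x y gxy; apply: val_inj.
case: (ltngtP (val x) (val y)) => // h; move: h.
  by rewrite -(mono x y) gxy ltnn.
by rewrite -(mono y x) gxy ltnn.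
Qed.

Lemma adms_map a b (g : 'I_a -> 'I_b) (mono : forall x y, (g x < g y)%N = (x < y)%N) s :
  adms (map (pm g) s) = adms s.
Proof.
rewrite /adms chs_map (map_inj_uniq (mono_inj mono)) all_map -!map_comp !sorted_map.
congr (_ && (_ && _)).
  by apply: eq_all => ij /=; exact: mono.
by apply: eq_sorted => x y /=; exact: mono.
Qed.

Lemma monoA p : forall x y : 'I_p, (fintype.lift (@ord0 p) x < fintype.lift ord0 y)%N = (x < y)%N.
Proof. by move=> x y; rewrite !L0 ltnS. Qed.

Lemma remsA p (s : seq ('I_p*'I_p)) :
  rems (map (pm (fintype.lift ord0)) s) = ord0 :: map (fintype.lift ord0) (rems s).
Proof.
symmetry; apply: rems_char.
  rewrite /= path_sortedE; last exact: ltv_trans.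
  apply/andP; split; first by apply/allP => m /mapP[m' _ ->]; rewrite /ltv L0.
  rewrite sorted_map; apply: (sub_sorted _ (rems_sorted s)) => x y.
  by rewrite /= /ltv !L0 ltnS.
move=> m; rewrite in_cons chs_map; case: (unliftP ord0 m) => [m'|] ->.
  rewrite eq_sym (negbTE (neq_lift _ _)) /= !(mem_map (@lift_inj _ ord0)).
  by rewrite mem_rems.
rewrite eqxx /=; symmetry; apply/negP => /mapP[x _ h].
by move: (neq_lift ord0 x); rewrite -h eqxx.
Qed.

Lemma sgsA p (s : seq ('I_p*'I_p)) : uniq (chs s) ->
  sgs (map (pm (fintype.lift ord0)) s) = lift_perm (inord (size (chs s))) ord0 (sgs s).
Proof.
move=> uc.
have uc' : uniq (chs (map (pm (fintype.lift ord0)) s)).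
  by rewrite chs_map map_inj_uniq //; exact: lift_inj.
have szc := size_cr uc; rewrite size_cat in szc.
have hsz : (size (chs s) < p.+1)%N by lia.
apply/permP => m; rewrite sgsE // remsA chs_map.
set i0 : 'I_p.+1 := inord _.
have vi0 : val i0 = size (chs s) by exact: inordK.
case: (unliftP i0 m) => [m'|] ->.
  rewrite lift_perm_lift sgsE //; apply: val_inj.
  have [lt|ge] := ltnP m' (size (chs s)).
    have e : val (fintype.lift i0 m') = m' by rewrite /= /bump vi0 leqNgt lt.
    rewrite e nth_cat size_map lt (nth_map m') // nth_cat lt.
    by [].
  have e : val (fintype.lift i0 m') = m'.+1 by rewrite /= /bump vi0 ge.
  rewrite e nth_cat size_map ltnNge (leqW ge) /= subSn //=.
  rewrite (nth_map m'); last by rewrite ltn_subLR // szc ltn_ord.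
  by rewrite nth_cat ltnNge ge.
rewrite lift_perm_id; apply: val_inj.
by rewrite vi0 nth_cat size_map ltnn subnn.
Qed.

Lemma bump_mono j x y : (bump j x < bump j y)%N = (x < y)%N.
Proof. by rewrite /bump; case: (leqP j x); case: (leqP j y) => /= h1 h2; lia. Qed.

Definition gB q (j : 'I_q.+1) (i : 'I_q) : 'I_q.+2 := fintype.lift ord0 (fintype.lift j i).

Lemma monoB q (j : 'I_q.+1) : forall x y, (gB j x < gB j y)%N = (x < y)%N.
Proof. by move=> x y; rewrite /gB !L0 ltnS /= bump_mono. Qed.

Lemma gB_inj q (j : 'I_q.+1) : injective (gB j).
Proof. exact: mono_inj (monoB j). Qed.

Lemma gB_neq0 q (j : 'I_q.+1) x : (gB j x == ord0) = false.
Proof. by rewrite /gB eq_sym (negbTE (neq_lift _ _)). Qed.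

Lemma gB_neqj q (j : 'I_q.+1) x : (gB j x == fintype.lift ord0 j) = false.
Proof. by rewrite /gB (inj_eq (@lift_inj _ ord0)) eq_sym (negbTE (neq_lift _ _)). Qed.

Lemma uniqB q (j : 'I_q.+1) s :
  uniq (chs ((ord0, fintype.lift ord0 j) :: map (pm (gB j)) s)) = uniq (chs s).
Proof.
rewrite chs_cons chs_map /= !in_cons (map_inj_uniq (@gB_inj q j)).
rewrite (negbTE (neq_lift _ _)) /=.
have -> : (ord0 \in map (gB j) (chs s)) = false.
  by apply/negP => /mapP[x _ /eqP]; rewrite eq_sym gB_neq0.
have -> : (fintype.lift ord0 j \in map (gB j) (chs s)) = false.
  by apply/negP => /mapP[x _ /eqP]; rewrite eq_sym gB_neqj.
by [].
Qed.

Lemma remsB q (j : 'I_q.+1) s :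
  rems ((ord0, fintype.lift ord0 j) :: map (pm (gB j)) s) = map (gB j) (rems s).
Proof.
symmetry; apply: rems_char.
  rewrite sorted_map; apply: (sub_sorted _ (rems_sorted s)) => x y.
  by rewrite /= /ltv monoB.
move=> m; rewrite chs_cons chs_map !in_cons.
case: (unliftP ord0 m) => [m1|] ->; last first.
  rewrite eqxx /=; apply/mapP => -[x _ /eqP]; by rewrite eq_sym gB_neq0.
case: (unliftP j m1) => [m2|] ->.
  have -> : fintype.lift ord0 (fintype.lift j m2) = gB j m2 by [].
  by rewrite gB_neq0 gB_neqj !(mem_map (@gB_inj q j)) mem_rems.
rewrite eqxx orbT /=; apply/mapP => -[x _ /eqP]; by rewrite eq_sym gB_neqj.
Qed.

Lemma sgsB q (j : 'I_q.+1) s : uniq (chs s) ->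
  sgs ((ord0, fintype.lift ord0 j) :: map (pm (gB j)) s) =
  lift_perm ord0 ord0 (lift_perm ord0 j (sgs s)).
Proof.
move=> uc; have uc' := uc; rewrite -(uniqB j) in uc'.
have szc := size_cr uc.
apply/permP => m; rewrite sgsE // remsB chs_cons chs_map /= -map_cat.
case: (unliftP ord0 m) => [m1|] ->; last by rewrite lift_perm_id.
rewrite lift_perm_lift; case: (unliftP ord0 m1) => [m2|] ->; last first.
  by rewrite lift_perm_id; apply: val_inj; rewrite !L0.
rewrite lift_perm_lift sgsE //; apply: val_inj; rewrite !L0 /=.
by rewrite (nth_map m2) // szc.
Qed.

Lemma admsB q (j : 'I_q.+1) s :
  adms ((ord0, fintype.lift ord0 j) :: map (pm (gB j)) s) = adms s.
Proof.
rewrite /adms uniqB /= all_map -!map_comp path_sortedE; last exact: ltn_trans.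
rewrite all_map !sorted_map.
congr (_ && (_ && _)).
  by apply: eq_all => ij /=; exact: monoB.
rewrite (_ : all _ s = true) /=; last by apply/allP => x _.
by apply: eq_sorted => x y /=; exact: monoB.
Qed.

Lemma memchsP p (s : seq ('I_p * 'I_p)) x :
  x \in chs s -> exists2 ij, ij \in s & (x == ij.1) || (x == ij.2).
Proof.
elim: s => //= a s IH; rewrite chs_cons !in_cons => /or3P[h|h|/IH[ij hij hx]].
- by exists a => //; rewrite ?mem_head ?h.
- by exists a => //; rewrite ?mem_head ?h ?orbT.
- by exists ij => //; rewrite in_cons hij orbT.
Qed.

Lemma chs_ge p (a : 'I_p * 'I_p) s : adms (a :: s) ->
  forall x, x \in chs (a :: s) -> (val a.1 <= val x)%N.
Proof.
move=> /and3P[/= /andP[lta alls] srt _] x.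
rewrite path_sortedE in srt; last exact: ltn_trans.
case/andP: srt => allf _.
rewrite chs_cons !in_cons => /or3P[/eqP->|/eqP->|]; first by [].
  exact: ltnW.
case/memchsP => ij hij /orP[] /eqP->.
  by apply: ltnW; move/allP: allf; apply; apply: map_f.
have h1 : (val a.1 < val ij.1)%N by move/allP: allf; apply; apply: map_f.
have h2 : (val ij.1 < val ij.2)%N by move/allP: alls; apply.
by apply: ltnW; apply: ltn_trans h2.
Qed.

Lemma map_preim a b (g : 'I_a -> 'I_b) (s : seq ('I_b * 'I_b)) :
  (forall x, x \in chs s -> x \in codom g) -> exists s', s = map (pm g) s'.
Proof.
elim: s => [|ij s IH] h; first by exists [::].
have /codomP[x1 ex1] : ij.1 \in codom g by apply: h; rewrite chs_cons mem_head.
have /codomP[x2 ex2] : ij.2 \in codom g.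
  by apply: h; rewrite chs_cons in_cons mem_head orbT.
have [s' es'] : exists s', s = map (pm g) s'.
  by apply: IH => x hx; apply: h; rewrite chs_cons !in_cons hx !orbT.
by exists ((x1, x2) :: s'); rewrite /= es' /pm -ex1 -ex2; case: ij {h ex1 ex2}.
Qed.

Lemma pm_inj a b (g : 'I_a -> 'I_b) : injective g -> injective (pm g).
Proof. by move=> inj [a1 a2] [b1 b2] [/inj -> /inj ->]. Qed.

Definition hA p k (t : k.-tuple ('I_p * 'I_p)) : k.-tuple ('I_p.+1 * 'I_p.+1) :=
  [tuple of map (pm (fintype.lift ord0)) t].
Definition hB q k (j : 'I_q.+1) (t : k.-tuple ('I_q * 'I_q)) :
  k.+1.-tuple ('I_q.+2 * 'I_q.+2) :=
  [tuple of (ord0, fintype.lift ord0 j) :: map (pm (gB j)) t].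

Arguments hA {p k}.
Arguments hB {q k}.

Lemma hA_inj p k : injective (@hA p k).
Proof.
move=> x y /(congr1 val) /=; move/(inj_map (pm_inj (@lift_inj _ ord0))).
exact: val_inj.
Qed.

Lemma hB_inj q k j : injective (@hB q k j).
Proof.
move=> x y /(congr1 val) /= [] /(inj_map (pm_inj (@gB_inj q j))).
exact: val_inj.
Qed.

Lemma setA p k :
  [set t : k.+1.-tuple ('I_p.+1 * 'I_p.+1) | adms t && ~~ ((thead t).1 == ord0)]
  = hA @: [set t0 : k.+1.-tuple ('I_p * 'I_p) | adms t0].
Proof.
apply/setP => t; rewrite inE; apply/andP/imsetP.
  case/tupleP: t => a t'; rewrite theadE => -[ad ne].
  have hx : forall x, x \in chs (a :: t') -> x \in codom (fintype.lift ord0).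
    move=> x /(chs_ge ad) hx; case: (unliftP ord0 x) => [x'|] ex.
      by apply/codomP; exists x'.
    by move: ne hx; rewrite ex /= => ne; rewrite leqn0 => /eqP h;
      case/eqP: ne; apply: val_inj.
  have [s0 es0] := map_preim hx.
  have sz : size s0 == k.+1 by rewrite -(size_map (pm (fintype.lift ord0))) -es0 /= size_tuple.
  exists (Tuple sz); first by rewrite inE -(adms_map (@monoA p)) /= -es0.
  by apply: val_inj; rewrite /= -es0.
case=> t0; rewrite inE => ad ->; split; first by rewrite /= adms_map //; exact: monoA.
case/tupleP: t0 {ad} => a t0'.
by rewrite /thead (tnth_nth (ord0, ord0)) /=.
Qed.

Lemma setB q k (j : 'I_q.+1) :
  [set t : k.+1.-tuple ('I_q.+2 * 'I_q.+2) |
     (adms t && ((thead t).1 == ord0)) && ((thead t).2 == fintype.lift ord0 j)]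
  = hB j @: [set t'' : k.-tuple ('I_q * 'I_q) | adms t''].
Proof.
apply/setP => t; rewrite inE; apply/idP/imsetP.
  case/tupleP: t => a t'; rewrite theadE => /andP[/andP[ad e1] e2].
  have ea : a = (ord0, fintype.lift ord0 j).
    by case: a e1 e2 {ad} => a1 a2 /= /eqP-> /eqP->.
  subst a.
  have ad' := ad; move: ad' => /and3P[_ _]; rewrite chs_cons /= !in_cons.
  case/andP => /norP[_ n0] /andP[nj _].
  have hx : forall x, x \in chs t' -> x \in codom (gB j).
    move=> x hx; case: (unliftP ord0 x) => [x1|] ex; last first.
      by move: n0; rewrite -ex hx.
    case: (unliftP j x1) => [x2|] ex1; last first.
      by move: nj; rewrite -ex1 -ex hx.
    by apply/codomP; exists x2; rewrite ex ex1.
  have [s'' es''] := map_preim hx.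
  have sz : size s'' == k by rewrite -(size_map (pm (gB j))) -es'' size_tuple.
  exists (Tuple sz); first by rewrite inE -(admsB j) /= -es''.
  by apply: val_inj; rewrite /= -es''.
case=> t''; rewrite inE => ad ->.
by rewrite theadE /= admsB ad !eqxx.
Qed.

Local Open Scope ring_scope.

Section Core.
Variables (K : fieldType) (V : lmodType K) (F : V -> V -> K).

HB.instance Definition _ (g : seq V -> freeT V) :=
  GRing.isAdditive.Build (freeT V) (freeT V) (fglift g) (lift_is_additive g).

Lemma fglift1 (g : seq V -> freeT V) u : fglift g << u >> = g u.
Proof. by rewrite liftU scale1r. Qed.

Lemma freegZU (c : K) (u : seq V) : << c *g u >> = c *: (<< u >> : freeT V).
Proof.
have -> : c *: (<< u >> : freeT V) =
   \sum_(x <- dom (<< u >> : freeT V)) << c * coeff x (<< u >> : freeT V) *g x >> by [].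
by rewrite domU1 big_seq1 coeffU eqxx mulr1 mulr1.
Qed.

Lemma fgliftZ (g : seq V -> freeT V) (c : K) (D : freeT V) :
  fglift g (c *: D) = c *: fglift g D.
Proof.
have -> : c *: D = \sum_(x <- dom D) << c * coeff x D *g x >> by [].
rewrite raddf_sum -[in RHS](freeg_sumE D) raddf_sum scaler_sumr.
by apply: eq_bigr => z _ /=; rewrite !liftU scalerA.
Qed.

Lemma fg_ext (M : lmodType K) (phi psi : freeT V -> M) :
  {morph phi : a b / a + b} -> (forall c a, phi (c *: a) = c *: phi a) ->
  {morph psi : a b / a + b} -> (forall c a, psi (c *: a) = c *: psi a) ->
  (forall u, phi << u >> = psi << u >>) -> forall T, phi T = psi T.
Proof.
move=> phiD phiZ psiD psiZ h T.
have phi0 : phi 0 = 0 by rewrite -(scale0r 0) phiZ scale0r.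
have psi0 : psi 0 = 0 by rewrite -(scale0r 0) psiZ scale0r.
rewrite -(freeg_sumE T) (big_morph phi phiD phi0) (big_morph psi psiD psi0).
by apply: eq_bigr => z _; rewrite freegZU phiZ psiZ h.
Qed.

Definition Gs p (f : nat -> V) (s : seq ('I_p * 'I_p)) : freeT V :=
  (((-1) ^+ odd_perm (sgs s)) * \prod_(ij <- s) F (f ij.1) (f ij.2))
     *: << [seq f (val m) | m <- rems s] >>.
Definition Aw p k f := \sum_(t : k.-tuple ('I_p * 'I_p) | adms t) Gs f t.

Lemma a_word_Aw k w : a_word F k w = Aw (size w) k (nth 0 w).
Proof. by []. Qed.

Lemma Aw_ext p k f g : f =1 g -> Aw p k f = Aw p k g.
Proof.
move=> e; apply: eq_bigr => t _; rewrite /Gs.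
rewrite (eq_bigr (fun ij : 'I_p * 'I_p => F (g ij.1) (g ij.2))); last by move=> ij _; rewrite !e.
by rewrite (eq_map (fun m : 'I_p => e (val m))).
Qed.

Definition Lx (x : V) := fglift (fun u : seq V => << x :: u >> : freeT V).

Lemma AwSS p k f :
  Aw p.+1 k.+1 f = Lx (f 0%N) (Aw p k.+1 (fun i => f i.+1)) +
    \sum_(j < p) ((-1) ^+ j * F (f 0%N) (f j.+1)) *:
        Aw p.-1 k (fun i => f (bump j i).+1).
Proof.
rewrite /Aw (bigID (fun t : k.+1.-tuple ('I_p.+1 * 'I_p.+1) => (thead t).1 == ord0)) /= addrC.
congr (_ + _).
  rewrite (eq_bigl (mem [set t : k.+1.-tuple ('I_p.+1 * 'I_p.+1) |
                          adms t && ~~ ((thead t).1 == ord0)])); last by move=> t; rewrite !inE.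
  rewrite setA big_imset; last by move=> x y _ _; apply: hA_inj.
  rewrite /Lx raddf_sum.
  apply: eq_big => t0; first by rewrite inE.
  rewrite inE => ad; rewrite /Gs /= fgliftZ fglift1 /=.
  have uc : uniq (chs t0) by case/and3P: ad.
  have szc := size_cr uc; rewrite size_cat in szc.
  rewrite sgsA // odd_lift_perm /= inordK; last by rewrite ltnS; apply: leq_trans (leq_addr _ _) (eq_leq szc).
  rewrite size_chs odd_double /= big_map remsA /= -map_comp.
  by [].
case: p f => [|q] f.
  rewrite big_ord0 big_pred0 // => t; case/tupleP: t => a t'; rewrite theadE.
  apply/negP => /andP[/and3P[/= /andP[h _] _ _] _].
  by move: h (ltn_ord a.2); lia.
rewrite (partition_big (fun t : k.+1.-tuple ('I_q.+2 * 'I_q.+2) => (thead t).2)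
                       (fun j => j != ord0)); last first.
  move=> t; case/tupleP: t => a t'; rewrite theadE.
  case/andP=> /and3P[/= /andP[lt _] _ _] /eqP e1; apply/eqP => e2.
  by move: lt; rewrite e1 e2 ltnn.
rewrite big_mkcond big_ord_recl eqxx /= add0r.
apply: eq_bigr => j _.
rewrite (eq_bigl (mem [set t : k.+1.-tuple ('I_q.+2 * 'I_q.+2) |
     (adms t && ((thead t).1 == ord0)) && ((thead t).2 == fintype.lift ord0 j)]));
  last by move=> t; rewrite !inE.
rewrite setB big_imset; last by move=> x y _ _; apply: hB_inj.
rewrite scaler_sumr.
apply: eq_big => t''; first by rewrite inE.
rewrite inE => ad; rewrite /Gs /=.
have uc : uniq (chs t'') by case/and3P: ad.
rewrite sgsB // !odd_lift_perm /= big_cons big_map remsB -map_comp scalerA.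
congr (_ *: _).
rewrite signr_addb signr_odd.
rewrite (eq_bigr (fun ij : 'I_q * 'I_q => F (f (bump j ij.1).+1) (f (bump j ij.2).+1))) //.
rewrite (_ : F (f (ord0, fintype.lift ord0 j).1) (f (ord0, fintype.lift ord0 j).2)
           = F (f 0%N) (f j.+1)) //.
by rewrite !mulrA; congr (_ * _); rewrite -!mulrA; congr (_ * _); rewrite mulrC.
Qed.


Definition lin (phi : freeT V -> freeT V) :=
  {morph phi : a b / a + b} /\ (forall c a, phi (c *: a) = c *: phi a).

Lemma lin_fglift g : lin (fglift g).
Proof. by split; [exact: raddfD | exact: fgliftZ]. Qed.

Lemma lin_id : lin id.
Proof. by []. Qed.

Lemma lin_comp phi psi : lin phi -> lin psi -> lin (phi \o psi).
Proof.
move=> [pD pZ] [qD qZ]; split; first by move=> a b /=; rewrite qD pD.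
by move=> c a /=; rewrite qZ pZ.
Qed.

Lemma lin_add phi psi : lin phi -> lin psi -> lin (fun T => phi T + psi T).
Proof.
move=> [pD pZ] [qD qZ]; split; first by move=> a b /=; rewrite pD qD addrACA.
by move=> c a /=; rewrite pZ qZ scalerDr.
Qed.

Lemma lin_scale (c : K) phi : lin phi -> lin (fun T => c *: phi T).
Proof.
move=> [pD pZ]; split; first by move=> a b /=; rewrite pD scalerDr.
by move=> d a /=; rewrite pZ !scalerA mulrC.
Qed.

Lemma lin_opp phi : lin phi -> lin (fun T => - phi T).
Proof.
move=> [pD pZ]; split; first by move=> a b /=; rewrite pD opprD.
by move=> d a /=; rewrite pZ scalerN.
Qed.

Lemma lin_ext phi psi : lin phi -> lin psi ->
  (forall u, phi << u >> = psi << u >>) -> forall T, phi T = psi T.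
Proof. by move=> [pD pZ] [qD qZ]; apply: fg_ext. Qed.

Definition rem_at (j : nat) (u : seq V) := take j u ++ drop j.+1 u.

Lemma size_rem_at j u : (j < size u)%N -> size (rem_at j u) = (size u).-1.
Proof. by move=> h; rewrite size_cat size_take h size_drop; lia. Qed.

Lemma nth_rem_at j u i : (j < size u)%N -> nth 0 (rem_at j u) i = nth 0 u (bump j i).
Proof.
move=> h; rewrite nth_cat size_take h /bump.
case: (ltnP i j) => hij.
  by rewrite nth_take.
rewrite nth_drop; congr nth; change (true + i)%N with i.+1; lia.
Qed.

Definition Dw (x : V) (u : seq V) : freeT V :=
  \sum_(j < size u) ((-1) ^+ j * F x (nth 0 u j)) *: << rem_at j u >>.
Definition Dx x := fglift (Dw x).

Lemma Aw0 p f : Aw p 0 f = << [seq f i | i <- iota 0 p] >>.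
Proof.
rewrite /Aw (big_pred1 [tuple]); last first.
  move=> t; transitivity true; last by apply/esym/eqP; exact: tuple0.
  by rewrite [t]tuple0.
rewrite /Gs /=.
have -> : sgs (nil : seq ('I_p * 'I_p)) = 1%g.
  by apply/permP => m; rewrite sgsE // perm1 /= /rems /= filter_predT nth_ord_enum.
rewrite /Gs odd_perm1 /= big_nil mulr1 scale1r /rems /= filter_predT.
by rewrite -val_enum_ord -map_comp.
Qed.

Lemma a_word0 w : a_word F 0 w = << w >>.
Proof. by rewrite a_word_Aw Aw0 -/(mkseq _ _) mkseq_nth. Qed.

Lemma Aw_nil k f : Aw 0 k.+1 f = 0.
Proof.
rewrite /Aw big_pred0 // => t; case/tupleP: t => a t'.
by case: a => [[]].
Qed.

Lemma a_word_nil k : a_word F k.+1 [::] = 0.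
Proof. by rewrite a_word_Aw Aw_nil. Qed.

Lemma a_word_cons k x u :
  a_word F k.+1 (x :: u) = Lx x (a_word F k.+1 u) + aF F k (Dw x u).
Proof.
rewrite !a_word_Aw /= AwSS /=; congr (_ + _).
rewrite /aF /Dw raddf_sum; apply: eq_bigr => j _ /=.
rewrite fgliftZ fglift1 a_word_Aw size_rem_at //; congr (_ *: _).
by apply: Aw_ext => i; rewrite nth_rem_at.
Qed.

Lemma Dw_nil x : Dw x [::] = 0.
Proof. by rewrite /Dw big_ord0. Qed.

Lemma Dw_cons x y u : Dw x (y :: u) = F x y *: << u >> - Lx y (Dw x u).
Proof.
rewrite /Dw /= big_ord_recl /= expr0 mul1r /rem_at /= drop0.
congr (_ + _); rewrite /Lx raddf_sum -sumrN; apply: eq_bigr => j _ /=.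
by rewrite exprS mulN1r mulNr scaleNr fgliftZ fglift1.
Qed.

Lemma Lx1 x u : Lx x << u >> = << x :: u >>.
Proof. by rewrite /Lx fglift1. Qed.
Lemma Dx1 x u : Dx x << u >> = Dw x u.
Proof. by rewrite /Dx fglift1. Qed.
Lemma aF1 k u : aF F k << u >> = a_word F k u.
Proof. by rewrite /aF fglift1. Qed.

Lemma LxB x a b : Lx x (a - b) = Lx x a - Lx x b.
Proof. by rewrite /Lx raddfB. Qed.
Lemma LxN x a : Lx x (- a) = - Lx x a.
Proof. by rewrite /Lx raddfN. Qed.
Lemma LxZ x c a : Lx x (c *: a) = c *: Lx x a.
Proof. by rewrite /Lx fgliftZ. Qed.
Lemma DxB x a b : Dx x (a - b) = Dx x a - Dx x b.
Proof. by rewrite /Dx raddfB. Qed.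
Lemma DxD x a b : Dx x (a + b) = Dx x a + Dx x b.
Proof. by rewrite /Dx raddfD. Qed.
Lemma DxZ x c a : Dx x (c *: a) = c *: Dx x a.
Proof. by rewrite /Dx fgliftZ. Qed.
Lemma Dx0 x : Dx x 0 = 0.
Proof. by rewrite /Dx raddf0. Qed.
Lemma aFB k a b : aF F k (a - b) = aF F k a - aF F k b.
Proof. by rewrite /aF raddfB. Qed.
Lemma aFD k a b : aF F k (a + b) = aF F k a + aF F k b.
Proof. by rewrite /aF raddfD. Qed.
Lemma aFN k a : aF F k (- a) = - aF F k a.
Proof. by rewrite /aF raddfN. Qed.
Lemma aFZ k c a : aF F k (c *: a) = c *: aF F k a.
Proof. by rewrite /aF fgliftZ. Qed.
Lemma aF0' k : aF F k 0 = 0.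
Proof. by rewrite /aF raddf0. Qed.

Lemma aF0 T : aF F 0 T = T.
Proof.
apply: (lin_ext (lin_fglift _) lin_id) => u.
by rewrite /aF fglift1 a_word0.
Qed.

Lemma aF_nil k : aF F k.+1 << [::] >> = 0.
Proof. by rewrite aF1 a_word_nil. Qed.

Lemma aF_L k x T : aF F k.+1 (Lx x T) = Lx x (aF F k.+1 T) + aF F k (Dx x T).
Proof.
apply: (lin_ext (phi := fun T => aF F k.+1 (Lx x T))
                (psi := fun T => Lx x (aF F k.+1 T) + aF F k (Dx x T))).
- exact: lin_comp (lin_fglift _) (lin_fglift _).
- exact: lin_add (lin_comp (lin_fglift _) (lin_fglift _))
                 (lin_comp (lin_fglift _) (lin_fglift _)).
by move=> u; rewrite Lx1 Dx1 !aF1 a_word_cons.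
Qed.

Lemma Dx_L x y T : Dx x (Lx y T) = F x y *: T - Lx y (Dx x T).
Proof.
apply: (lin_ext (phi := fun T => Dx x (Lx y T))
                (psi := fun T => F x y *: T - Lx y (Dx x T))).
- exact: lin_comp (lin_fglift _) (lin_fglift _).
- exact: lin_add (lin_scale _ lin_id) (lin_opp (lin_comp (lin_fglift _) (lin_fglift _))).
by move=> u; rewrite Lx1 !Dx1 Dw_cons.
Qed.

Lemma Dx_anti_w x y u : Dx x (Dx y << u >>) = - Dx y (Dx x << u >>).
Proof.
elim: u => [|z u IH]; first by rewrite !Dx1 !Dw_nil !Dx0 oppr0.
rewrite !Dx1 !Dw_cons !DxB !DxZ !Dx_L -!Dx1 IH LxN.
by rewrite !opprB addrA.
Qed.

Lemma Dx_anti x y T : Dx x (Dx y T) = - Dx y (Dx x T).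
Proof.
apply: (lin_ext (phi := fun T => Dx x (Dx y T))
                (psi := fun T => - Dx y (Dx x T))).
- exact: lin_comp (lin_fglift _) (lin_fglift _).
- exact: lin_opp (lin_comp (lin_fglift _) (lin_fglift _)).
exact: Dx_anti_w.
Qed.

Lemma span_D (phi psi : freeT V -> freeT V) y u : lin phi -> lin psi ->
  (forall j, (j < size u)%N -> phi << rem_at j u >> = psi << rem_at j u >>) ->
  phi (Dx y << u >>) = psi (Dx y << u >>).
Proof.
move=> [pD pZ] [qD qZ] h.
have phi0 : phi 0 = 0 by have := pZ 0 0; rewrite !scale0r.
have psi0 : psi 0 = 0 by have := qZ 0 0; rewrite !scale0r.
rewrite Dx1 /Dw (big_morph phi pD phi0) (big_morph psi qD psi0).
by apply: eq_bigr => j _; rewrite pZ qZ h.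
Qed.

Lemma Dx_comm_w n : forall u, (size u <= n)%N ->
  forall x l, Dx x (aF F l << u >>) = aF F l (Dx x << u >>).
Proof.
elim: n => [|n IH] [|y u] //= hu x [|l]; rewrite ?aF0 //.
- by rewrite aF_nil Dx1 Dw_nil Dx0 aF0'.
- by rewrite aF_nil Dx1 Dw_nil Dx0 aF0'.
rewrite -Lx1 aF_L Dx_L DxD Dx_L (IH u hu).
rewrite (span_D (phi := fun T => Dx x (aF F l T)) (psi := fun T => aF F l (Dx x T))).
- rewrite Dx_anti aFN aFB aF_L aFZ opprD addrA; congr (_ + _).
- exact: lin_comp (lin_fglift _) (lin_fglift _).
- exact: lin_comp (lin_fglift _) (lin_fglift _).
move=> j hj; apply: IH; rewrite size_rem_at //; move: hu hj; lia.
Qed.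

Lemma Dx_comm x l T : Dx x (aF F l T) = aF F l (Dx x T).
Proof.
apply: (lin_ext (phi := fun T => Dx x (aF F l T))
                (psi := fun T => aF F l (Dx x T))).
- exact: lin_comp (lin_fglift _) (lin_fglift _).
- exact: lin_comp (lin_fglift _) (lin_fglift _).
by move=> u; apply: (Dx_comm_w (leqnn _)).
Qed.

Lemma main_w n : forall u, (size u <= n)%N -> forall k l,
  aF F k (aF F l << u >>) = 'C(k + l, k)%:R *: aF F (k + l) << u >>.
Proof.
elim: n => [|n IH] u hu k l.
all: case: k => [|k]; first by rewrite aF0 bin0 scale1r.
all: case: l => [|l]; first by rewrite aF0 addn0 binn scale1r.
all: case: u hu => [|y u] hu.
- by rewrite aF_nil aF0' addSn aF_nil scaler0.
- by [].
- by rewrite aF_nil aF0' addSn aF_nil scaler0.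
have hu' : (size u <= n)%N by [].
rewrite !addSn !addnS -Lx1 !aF_L aFD aF_L (IH u hu') Dx_comm.
rewrite (span_D (phi := fun T => aF F k (aF F l.+1 T))
                (psi := fun T => 'C(k + l.+1, k)%:R *: aF F (k + l.+1) T)); last first.
- move=> j hj; apply: IH; rewrite size_rem_at //; exact: leq_trans (leq_pred _) hu'.
- exact: lin_scale _ (lin_fglift _).
- exact: lin_comp (lin_fglift _) (lin_fglift _).
rewrite (span_D (phi := fun T => aF F k.+1 (aF F l T))
                (psi := fun T => 'C(k.+1 + l, k.+1)%:R *: aF F (k.+1 + l) T)); last first.
- move=> j hj; apply: IH; rewrite size_rem_at //; exact: leq_trans (leq_pred _) hu'.
- exact: lin_scale _ (lin_fglift _).
- exact: lin_comp (lin_fglift _) (lin_fglift _).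
rewrite !addSn !addnS LxZ scalerDr -addrA; congr (_ + _).
by rewrite -scalerDl -natrD addnC [in RHS]binS.
Qed.

Lemma main_T k l T : aF F k (aF F l T) = 'C(k + l, k)%:R *: aF F (k + l) T.
Proof.
apply: (lin_ext (phi := fun T => aF F k (aF F l T))
                (psi := fun T => 'C(k + l, k)%:R *: aF F (k + l) T)).
- exact: lin_comp (lin_fglift _) (lin_fglift _).
- exact: lin_scale _ (lin_fglift _).
by move=> u; apply: (main_w (leqnn _)).
Qed.

End Core.

Unset Implicit Arguments.

Theorem mainTheorem6 (K : fieldType) (V : lmodType K) (F : V -> V -> K)
  (F_linl : forall (a : K) (x y z : V), F (a *: x + y) z = a * F x z + F y z)
  (F_linr : forall (a : K) (x y z : V), F x (a *: y + z) = a * F x y + F x z)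
  (k l : nat) :
  forall t : freeT V,
    tensor_eq (aF F k (aF F l t)) ('C(k + l, k)%:R *: aF F (k + l) t) /\
    tensor_eq (aF F l (aF F k t)) ('C(k + l, k)%:R *: aF F (k + l) t).
Proof.
move=> t; split; rewrite /tensor_eq.
  by rewrite main_T subrr; exact: span0.
rewrite main_T [(l + k)%N]addnC.
have -> : 'C(k + l, l) = 'C(k + l, k) by rewrite -(bin_sub (leq_addl k l)) addnK.
rewrite subrr.
exact: span0.
Qed.
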